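(* Let $r\ge2$ and $h_s:=e_s-f_s\in\mathbb{K}[\mathcal{S}_{r+1}]$. Then for every Young tableau $t$ (standard or not) of frame $(r,1)\vdash r+1$, one has $h_s\cdot e_t\neq h_s$. In particular no such $e_t$ generates the minimal left ideal $\mathbb{K}[\mathcal{S}_{r+1}]\cdot h_s$.
   Context: $\mathbb{K}\in\{\mathbb{R},\mathbb{C}\}$; group ring product $(p\cdot q)(i)=p(q(i))$. $\tilde{\mathcal S}_r=\{p\in\mathcal{S}_{r+1}:p(r+1)=r+1\}$, $e_s=\frac1{r!}\sum_{p\in\tilde{\mathcal S}_r}p$, $f_s=\frac1{(r+1)!}\sum_{p\in\mathcal{S}_{r+1}}p$. For a Young tableau $t$ (a filling of a Young frame with $1,\ldots,r+1$, each once), $\mathcal{H}_t$, $\mathcal{V}_t$ are the row- and column-preserving permutation groups, $y_t=\sum_{p\in\mathcal{H}_t}\sum_{q\in\mathcal{V}_t}\mathrm{sign}(q)\,p\cdot q$, and $e_t=\mu_ty_t$ with the nonzero constant $\mu_t$ making $e_t$ idempotent. The frame $(r,1)$ has a first row of $r$ boxes and a second row of one box. *)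

(* Defs.v *)
From mathcomp Require Import all_boot all_order all_algebra all_fingroup.
Set Implicit Arguments. Unset Strict Implicit. Unset Printing Implicit Defensive.
Import GRing.Theory Num.Theory.
Local Open Scope ring_scope.

(* Group algebra K[S_n] as finitely supported functions 'S_n -> K.
   Points are 0-indexed: 'I_n stands for {1,...,n}. *)
Notation galg K n := {ffun 'S_n -> K}.

(* Paper's product: (p . q)(i) = p(q(i)), i.e. composition "q first, then p".
   In MathComp (q * p)%g x = p (q x), so p . q = (q * p)%g. *)
Definition gcomp (n : nat) (p q : 'S_n) : 'S_n := (q * p)%g.

Definition gmul (K : numFieldType) (n : nat) (a b : galg K n) : galg K n :=
  [ffun g => \sum_(p : 'S_n) \sum_(q : 'S_n | gcomp p q == g) a p * b q].

Definition e_s (K : numFieldType) (r : nat) : galg K r.+1 :=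
  [ffun g : 'S_r.+1 => (r`!%:R)^-1 * (g ord_max == ord_max)%:R].

Definition f_s (K : numFieldType) (r : nat) : galg K r.+1 :=
  [ffun g => (r.+1`!%:R)^-1].

Definition h_s (K : numFieldType) (r : nat) : galg K r.+1 :=
  [ffun g => e_s K r g - f_s K r g].

(* Young frame (r,1): boxes are indexed by k : 'I_(r+1);
   box k < r is in row 0, column k; box r is in row 1, column 0.
   A Young tableau of frame (r,1) (standard or not) is a bijective filling of
   the boxes with the entries 1..r+1, i.e. a permutation t : box -> entry. *)
Definition row_of (r : nat) (k : 'I_r.+1) : nat := if (k < r)%N then 0%N else 1%N.
Definition col_of (r : nat) (k : 'I_r.+1) : nat := if (k < r)%N then val k else 0%N.

(* row-preserving permutations of the entries *)
Definition Hgrp (r : nat) (t : 'S_r.+1) : {set 'S_r.+1} :=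
  [set p : 'S_r.+1 | [forall k, row_of ((t^-1)%g (p (t k))) == row_of k]].
(* column-preserving permutations of the entries *)
Definition Vgrp (r : nat) (t : 'S_r.+1) : {set 'S_r.+1} :=
  [set q : 'S_r.+1 | [forall k, col_of ((t^-1)%g (q (t k))) == col_of k]].

Definition psign (K : numFieldType) (n : nat) (q : 'S_n) : K := (-1) ^+ odd_perm q.

Definition y_t (K : numFieldType) (r : nat) (t : 'S_r.+1) : galg K r.+1 :=
  [ffun g => \sum_(p in Hgrp t) \sum_(q in Vgrp t | gcomp p q == g) psign K q].

Definition gscale (K : numFieldType) (n : nat) (c : K) (a : galg K n) : galg K n :=
  [ffun g => c * a g].

(* Main.v *)
Require Import Defs.
From mathcomp Require Import all_boot all_order all_algebra all_fingroup.
Import GRing.Theory Num.Theory.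
Local Open Scope ring_scope.

Lemma gscaleE (K : numFieldType) n (c : K) (a : galg K n) g : gscale c a g = c * a g.
Proof. by rewrite ffunE. Qed.

Section Aux.
Variables (K : numFieldType) (r : nat) (hr : (0 < r)%N) (t : 'S_r.+1).

Let tau : 'S_r.+1 := tperm (t ord0) (t ord_max).

Lemma ord0_max : (ord0 : 'I_r.+1) != ord_max.
Proof. by rewrite -(inj_eq val_inj) /= eq_sym -lt0n hr. Qed.

Lemma col0 : col_of (ord0 : 'I_r.+1) = 0%N.
Proof. by rewrite /col_of /=; case: ifP. Qed.

Lemma colm : col_of (ord_max : 'I_r.+1) = 0%N.
Proof. by rewrite /col_of /= ltnn. Qed.

Lemma V_step q : q \in Vgrp t -> (tau * q)%g \in Vgrp t.
Proof.
rewrite !inE => /forallP H; apply/forallP => k; rewrite permM /tau.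
case: tpermP => [/perm_inj ->|/perm_inj ->|_ _]; last exact: H.
- by have := H ord_max; rewrite colm col0.
- by have := H ord0; rewrite colm col0.
Qed.

Lemma V_tau q : ((tau * q)%g \in Vgrp t) = (q \in Vgrp t).
Proof.
apply/idP/idP; last exact: V_step.
by move/V_step; rewrite mulgA /tau tperm2 mul1g.
Qed.

Lemma y_anti x : y_t K t (tau * x)%g = - y_t K t x.
Proof.
rewrite !ffunE -sumrN; apply: eq_bigr => p _.
rewrite (reindex_inj (mulgI tau)) /= -sumrN.
apply: eq_big => q.
  by rewrite V_tau /gcomp -mulgA (inj_eq (mulgI _)).
move=> _; rewrite /psign /tau odd_mul_tperm (inj_eq perm_inj) ord0_max.
by rewrite signr_addb expr1 mulN1r.
Qed.

Lemma gmul_anti mu (a : galg K r.+1) g :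
  gmul a (gscale mu (y_t K t)) (tau * g)%g = - gmul a (gscale mu (y_t K t)) g.
Proof.
rewrite !ffunE -sumrN; apply: eq_bigr => p _.
rewrite (reindex_inj (mulgI tau)) /= -sumrN.
apply: eq_big => q.
  by rewrite /gcomp -mulgA (inj_eq (mulgI _)).
by move=> _; rewrite !gscaleE y_anti mulrN mulrN.
Qed.

End Aux.

Lemma gmul_id (K : numFieldType) n (h : galg K n) :
  gmul [ffun p => ((p == 1%g)%:R : K)] h = h.
Proof.
apply/ffunP => g; rewrite ffunE (bigD1 1%g) //=.
rewrite [X in _ + X]big1; last first.
  move=> p Hp; apply: big1 => q _; rewrite ffunE.
  by rewrite (negbTE Hp) mul0r.
rewrite addr0 (big_pred1 g) ?ffunE ?eqxx ?mul1r // => q.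
by rewrite /gcomp mulg1.
Qed.

Theorem theorem5 (K : numFieldType) (r : nat) (hr : (2 <= r)%N)
    (t : 'S_r.+1) (mu : K) (hmu : mu != 0)
    (hidem : gmul (gscale mu (y_t K t)) (gscale mu (y_t K t)) = gscale mu (y_t K t)) :
  gmul (h_s K r) (gscale mu (y_t K t)) <> h_s K r /\
  ~ (forall x : galg K r.+1,
        (exists a, x = gmul a (gscale mu (y_t K t))) <-> (exists b, x = gmul b (h_s K r))).
Proof.
have hr0 : (0 < r)%N := ltnW hr.
have hr1 : (1 < r.+1)%N := ltnW hr.
set tau : 'S_r.+1 := tperm (t ord0) (t ord_max).
move Ed : (tau ord_max) => d.
pose c : 'I_r.+1 := if d == inord 0 then inord 1 else inord 0.
have cn : c != ord_max.
  rewrite /c; case: ifP => _; apply/eqP => /(congr1 val);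
  rewrite /= inordK //= => E; move: hr; rewrite -E //.
have cd : c != d.
  rewrite /c; case: (d =P inord 0) => [->|/eqP]; last by rewrite eq_sym.
  by apply/eqP => /(congr1 val); rewrite /= !inordK.
pose g : 'S_r.+1 := tperm c ord_max.
have hval (x : 'S_r.+1) : x ord_max != ord_max -> h_s K r x = - (r.+1`!%:R)^-1.
  by move=> Hx; rewrite !ffunE (negbTE Hx) mulr0 sub0r.
have g1 : g ord_max != ord_max by rewrite /g tpermR.
have g2 : (tau * g)%g ord_max != ord_max.
  rewrite permM Ed /g; case: tpermP => [E|_|_ /eqP //].
    by move: cd; rewrite E eqxx.
  exact: cn.
have hnz : h_s K r g != 0.
  by rewrite hval // oppr_eq0 invr_eq0 pnatr_eq0 -lt0n fact_gt0.
have key : forall a, h_s K r <> gmul a (gscale mu (y_t K t)).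
  move=> a Ha; have := @gmul_anti K r hr0 t mu a g.
  rewrite -Ha (hval _ g2) -(hval _ g1) => /eqP; rewrite -subr_eq0 opprK.
  by rewrite -mulr2n mulrn_eq0 /= (negbTE hnz).
split.
  by move=> E; apply: (key (h_s K r)); rewrite E.
move=> Hiff.
have [a Ha] := proj2 (Hiff (h_s K r)) (ex_intro _ _ (esym (@gmul_id K r.+1 (h_s K r)))).
exact: key a Ha.
Qed.
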